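(* Let $n \ge 1$, let $\mathcal{H}$ be a finite-dimensional Hilbert space and let $S$ be any system of the classical-quantum theory. Every leak $l : \mathcal{D}_n \otimes \mathcal{B}(\mathcal{H}) \to \mathcal{D}_n \otimes \mathcal{B}(\mathcal{H}) \otimes S$ for the composite classical-quantum system $\mathcal{D}_n \otimes \mathcal{B}(\mathcal{H})$ is of the form $$ l(|i\rangle\langle i| \otimes \rho) = |i\rangle\langle i| \otimes \rho \otimes \Lambda(|i\rangle\langle i|) \qquad (i = 1,\dots,n,\ \rho \in \mathcal{B}(\mathcal{H})),$$ for some causal (trace-preserving completely positive) process $\Lambda : \mathcal{D}_n \to S$; that is, $l$ copies the classical input, applies $\Lambda$ to one copy to produce the leaked output, and acts as the identity on the quantum input.
   Context: The classical-quantum process theory: systems are finite-dimensional algebras of the form $\mathcal{D}_n \otimes \mathcal{B}(\mathcal{H})$, where $\mathcal{D}_n$ is the algebra of diagonal $n\times n$ complex matrices (an $n$-state classical system, spanned by $|i\rangle\langle i|$) and $\mathcal{H}$ a finite-dimensional Hilbert space (a quantum system); composite systems are tensor products (with $\mathcal{D}_n\otimes\mathcal{D}_m \cong \mathcal{D}_{nm}$). Processes are completely positive maps between these algebras; discarding is the trace (partial trace on a factor), and a process is causal iff it is trace preserving. A leak for a system $A$ is a process $l : A \to A \otimes S$ such that tracing out the $S$ output gives the identity on $A$. *)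

(* Defs.v *)
(* Classical-quantum process theory, concretely:
   - scalars: C, a numeric closed field (instantiated with R[i], R : realType, i.e. the complex numbers);
   - an algebra A is represented as a subalgebra of a full matrix algebra 'M[C]_N, given by a membership predicate;
   - the tensor product of subalgebras is the (algebraic) span of Kronecker products x *t y (mxtens);
   - D_n = diagonal n x n matrices, B(C^d) = all d x d matrices, D_n (x) B(C^d) = their tensor product. *)
From HB Require Import structures.
From mathcomp Require Import all_boot all_algebra.
From mathcomp Require Import reals.
From mathcomp Require Export complex mxtens.

Set Implicit Arguments.
Unset Strict Implicit.
Unset Printing Implicit Defensive.

Import GRing.Theory Num.Theory.
Local Open Scope ring_scope.

Section CQ.
Variable C : numClosedFieldType.

Definition adjv N (v : 'cV[C]_N) : 'rV[C]_N := (map_mx (fun z => z^*) v)^T.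

(* Positivity of a d x d block matrix with blocks in 'M_N, i.e. of an element of
   M_d (x) M_N: v^* X v >= 0 for every vector v = (v_1,...,v_d), v_i in C^N. *)
Definition blockpos N d (X : 'I_d -> 'I_d -> 'M[C]_N) : Prop :=
  forall v : 'I_d -> 'cV[C]_N,
    0 <= \sum_(i < d) \sum_(j < d) (adjv (v i) *m X i j *m v j) 0 0.

Definition diag_alg n : 'M[C]_n -> Prop := fun X => is_diag_mx X.
Definition full_alg N : 'M[C]_N -> Prop := fun _ => True.

Definition tens_alg N M (inA : 'M[C]_N -> Prop) (inB : 'M[C]_M -> Prop)
  : 'M[C]_(N * M) -> Prop :=
  fun X => exists (p : nat) (xs : 'I_p -> 'M[C]_N) (ys : 'I_p -> 'M[C]_M),
    (forall r, inA (xs r) /\ inB (ys r)) /\ X = \sum_(r < p) (xs r *t ys r).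

Definition cq_alg n d : 'M[C]_(n * d) -> Prop := tens_alg (@diag_alg n) (@full_alg d).

Definition linmap N M (f : 'M[C]_N -> 'M[C]_M) : Prop :=
  forall (a : C) x y, f (a *: x + y) = a *: f x + f y.

(* complete positivity of f on the subalgebra inA: id_{M_d} (x) f is positive for all d *)
Definition CP N M (inA : 'M[C]_N -> Prop) (f : 'M[C]_N -> 'M[C]_M) : Prop :=
  forall d (X : 'I_d -> 'I_d -> 'M[C]_N),
    (forall i j, inA (X i j)) -> blockpos X -> blockpos (fun i j => f (X i j)).

Definition process N M (inA : 'M[C]_N -> Prop) (inB : 'M[C]_M -> Prop)
  (f : 'M[C]_N -> 'M[C]_M) : Prop :=
  [/\ linmap f, (forall x, inA x -> inB (f x)) & CP inA f].

Definition causal N M (inA : 'M[C]_N -> Prop) (f : 'M[C]_N -> 'M[C]_M) : Prop :=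
  forall x, inA x -> \tr (f x) = \tr x.

Definition ptrace2 N M (X : 'M[C]_(N * M)) : 'M[C]_N :=
  \matrix_(a, b) \sum_(c < M) X (mxtens_index (a, c)) (mxtens_index (b, c)).

Definition leak N M (inA : 'M[C]_N -> Prop) (inS : 'M[C]_M -> Prop)
  (l : 'M[C]_N -> 'M[C]_(N * M)) : Prop :=
  process inA (tens_alg inA inS) l /\ (forall x, inA x -> ptrace2 (l x) = x).

End CQ.

(* Main.v *)
Require Import Defs.
From HB Require Import structures.
From mathcomp Require Import all_boot all_algebra.
From mathcomp Require Import reals.
From mathcomp Require Import complex mxtens.
From mathcomp Require Import all_order ring.
Import Order.POrderTheory GRing.Theory Num.Theory.
Local Open Scope ring_scope.
Set Implicit Arguments.
Unset Strict Implicit.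

Section Gen.
Variable C : numClosedFieldType.

Lemma cs_core (b b' q : C) : 0 <= q ->
  (forall s t : C, 0 <= s^* * t * b + t^* * s * b' + t^* * t * q) -> b = 0 /\ b' = 0.
Proof.
move=> q0 H.
have qr : q^* = q by apply: conj_Creal; apply: ger0_real.
have E1 : (b + b' + q)^* = b + b' + q.
  apply: conj_Creal; apply: ger0_real; move: (H 1 1); by rewrite conjC1 !mul1r.
have E2 : ('i*b - 'i*b' + q)^* = 'i*b - 'i*b' + q.
  apply: conj_Creal; apply: ger0_real.
  suff -> : 'i*b - 'i*b' + q = 1^* * 'i * b + 'i^* * 1 * b' + 'i^* * 'i * q by apply: H.
  have ii : 'i * 'i = -1 :> C by rewrite -expr2 sqrCi.
  rewrite conjC1 conjCi !mulNr ii; ring.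
rewrite !rmorphD /= qr in E1.
rewrite !rmorphD !rmorphN !rmorphM /= conjCi qr in E2.
have hb' : b' = b^*.
  move/eqP: E1; rewrite -subr_eq0 => /eqP E1.
  move/eqP: E2; rewrite -subr_eq0 => /eqP E2.
  have key : 2 * 'i * (b' - b^*) = (- 'i * b^* - - 'i * b'^* + q - ('i * b - 'i * b' + q))
       - 'i * (b^* + b'^* + q - (b + b' + q)) by ring.
  rewrite E1 E2 mulr0 subr0 in key.
  apply/eqP; rewrite -subr_eq0; apply/eqP.
  move/eqP: key; rewrite !mulf_eq0 (negbTE (neq0Ci C)) orbF => /orP [|/eqP //].
  by rewrite pnatr_eq0.
have H3 := H (q + 1) (- b^*).
rewrite rmorphD /= qr conjC1 rmorphN /= conjCK hb' in H3.
have e : (q + 1) * - b^* * b + - b * (q + 1) * b^* + - b * - b^* * q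
   = - ((b * b^*) * (q + 2)) by ring.
rewrite e in H3.
have x0 := mul_conjC_ge0 b.
have q2 : 0 < q + 2 by apply: (le_lt_trans q0); rewrite ltrDl.
have : b * b^* * (q + 2) = 0.
  apply/eqP; rewrite eq_le; apply/andP; split; first by rewrite -oppr_ge0.
  by rewrite mulr_ge0 // ltW.
move/eqP; rewrite mulf_eq0 (gt_eqF q2) orbF mul_conjC_eq0 => /eqP e0.
by split=> //; rewrite hb' e0 rmorph0.
Qed.

Definition qf D N (Y : 'I_D -> 'I_D -> 'M[C]_N) (V W : 'I_D -> 'I_N -> C) : C :=
  \sum_p \sum_q \sum_x \sum_y (V p x)^* * Y p q x y * W q y.
Arguments qf {D N}.

Lemma adjv_entry N (v w : 'cV[C]_N) (A : 'M_N) :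
  (adjv v *m A *m w) 0 0 = \sum_x \sum_y (v x 0)^* * A x y * w y 0.
Proof.
rewrite mxE; under eq_bigr do rewrite mxE big_distrl.
rewrite exchange_big; apply: eq_bigr => x _; apply: eq_bigr => y _.
by rewrite !mxE.
Qed.

Lemma blockposE D N (Y : 'I_D -> 'I_D -> 'M[C]_N) :
  blockpos Y <-> forall V, 0 <= qf Y V V.
Proof.
split=> H V.
  suff -> : qf Y V V = \sum_p \sum_q (adjv (\col_x V p x) *m Y p q *m \col_x V q x) 0 0
    by apply: H.
  apply: eq_bigr => p _; apply: eq_bigr => q _; rewrite adjv_entry.
  by apply: eq_bigr => x _; apply: eq_bigr => y _; rewrite !mxE.
have := H (fun p x => V p x 0); rewrite /qf.
suff -> : \sum_(i < D) \sum_(j < D) (adjv (V i) *m Y i j *m V j) 0 0 =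
  \sum_p \sum_q \sum_x \sum_y (V p x 0)^* * Y p q x y * V q y 0 by [].
by apply: eq_bigr => p _; apply: eq_bigr => q _; rewrite adjv_entry.
Qed.

Lemma qfDl D N (Y : 'I_D -> 'I_D -> 'M[C]_N) s V V' W :
  qf Y (fun p x => s * V p x + V' p x) W = s^* * qf Y V W + qf Y V' W.
Proof.
rewrite /qf mulr_sumr -big_split; apply: eq_bigr => p _.
rewrite mulr_sumr -big_split; apply: eq_bigr => q _.
rewrite mulr_sumr -big_split; apply: eq_bigr => x _.
rewrite mulr_sumr -big_split; apply: eq_bigr => y _.
rewrite rmorphD rmorphM /=; ring.
Qed.

Lemma qfDr D N (Y : 'I_D -> 'I_D -> 'M[C]_N) t V W W' :
  qf Y V (fun p x => t * W p x + W' p x) = t * qf Y V W + qf Y V W'.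
Proof.
rewrite /qf mulr_sumr -big_split; apply: eq_bigr => p _.
rewrite mulr_sumr -big_split; apply: eq_bigr => q _.
rewrite mulr_sumr -big_split; apply: eq_bigr => x _.
rewrite mulr_sumr -big_split; apply: eq_bigr => y _.
rewrite /=; ring.
Qed.

Lemma qfZl D N (Y : 'I_D -> 'I_D -> 'M[C]_N) s V W :
  qf Y (fun p x => s * V p x) W = s^* * qf Y V W.
Proof.
rewrite /qf mulr_sumr; apply: eq_bigr => p _.
rewrite mulr_sumr; apply: eq_bigr => q _.
rewrite mulr_sumr; apply: eq_bigr => x _.
rewrite mulr_sumr; apply: eq_bigr => y _.
rewrite rmorphM /=; ring.
Qed.

Lemma qfZr D N (Y : 'I_D -> 'I_D -> 'M[C]_N) t V W :
  qf Y V (fun p x => t * W p x) = t * qf Y V W.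
Proof.
rewrite /qf mulr_sumr; apply: eq_bigr => p _.
rewrite mulr_sumr; apply: eq_bigr => q _.
rewrite mulr_sumr; apply: eq_bigr => x _.
rewrite mulr_sumr; apply: eq_bigr => y _.
rewrite /=; ring.
Qed.

Lemma qf_cs D N (Y : 'I_D -> 'I_D -> 'M[C]_N) (hY : forall V, 0 <= qf Y V V) V W :
  qf Y V V = 0 -> qf Y V W = 0 /\ qf Y W V = 0.
Proof.
move=> h0; apply: cs_core; first exact: hY.
move=> s t; have := hY (fun p x => s * V p x + (fun p x => t * W p x) p x).
rewrite qfDl !qfDr !qfZl !qfZr h0.
suff -> : s^* * (s * 0 + t * qf Y V W) + (s * (t^* * qf Y W V) + t^* * (t * qf Y W W)) =
   s^* * t * qf Y V W + t^* * s * qf Y W V + t^* * t * qf Y W W by [].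
ring.
Qed.

Definition uv D N (a : 'I_D) (z : 'I_N) : 'I_D -> 'I_N -> C :=
  fun p x => if (p == a) && (x == z) then 1 else 0.
Arguments uv {D N}.

Lemma qf_uvl D N (Y : 'I_D -> 'I_D -> 'M[C]_N) a z W :
  qf Y (uv a z) W = \sum_q \sum_y Y a q z y * W q y.
Proof.
rewrite /qf (bigD1 a) //= [X in _ + X]big1 ?addr0 => [|p /negbTE pa]; last first.
  apply: big1 => q _; apply: big1 => x _; apply: big1 => y _.
  by rewrite /uv pa /= conjC0 !mul0r.
apply: eq_bigr => q _; rewrite (bigD1 z) //= [X in _ + X]big1 ?addr0 => [|x /negbTE xz]; last first.
  by apply: big1 => y _; rewrite /uv xz andbF conjC0 !mul0r.
by apply: eq_bigr => y _; rewrite /uv !eqxx /= conjC1 mul1r.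
Qed.

Lemma qf_uvr D N (Y : 'I_D -> 'I_D -> 'M[C]_N) V b w :
  qf Y V (uv b w) = \sum_p \sum_x (V p x)^* * Y p b x w.
Proof.
rewrite /qf; apply: eq_bigr => p _.
rewrite (bigD1 b) //= [X in _ + X]big1 ?addr0 => [|q /negbTE qb]; last first.
  by apply: big1 => x _; apply: big1 => y _; rewrite /uv qb /= mulr0.
apply: eq_bigr => x _; rewrite (bigD1 w) //= [X in _ + X]big1 ?addr0 => [|y /negbTE yw]; last first.
  by rewrite /uv yw andbF mulr0.
by rewrite /uv !eqxx /= mulr1.
Qed.

Lemma qf_uv D N (Y : 'I_D -> 'I_D -> 'M[C]_N) a z b w :
  qf Y (uv a z) (uv b w) = Y a b z w.
Proof.
rewrite qf_uvl (bigD1 b) //= [X in _ + X]big1 ?addr0 => [|q /negbTE qb]; last first.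
  by apply: big1 => y _; rewrite /uv qb /= mulr0.
rewrite (bigD1 w) //= [X in _ + X]big1 ?addr0 => [|y /negbTE yw]; last first.
  by rewrite /uv yw andbF mulr0.
by rewrite /uv !eqxx /= mulr1.
Qed.


Notation ind a c := (mxtens_index (a, c)).

Lemma sum_tens N M (F : 'I_(N*M) -> C) :
  \sum_z F z = \sum_a \sum_c F (ind a c).
Proof.
rewrite pair_big /= (reindex (@mxtens_index N M)) /=; last first.
  by exists (@mxtens_unindex N M) => x _; [apply: mxtens_indexK | apply: mxtens_unindexK].
by apply: eq_big => // -[a c].
Qed.

Lemma block_prod D N M (Y : 'I_D -> 'I_D -> 'M[C]_(N*M)) (f : 'I_D -> 'I_N) (p0 : 'I_D) :
  blockpos Y -> (forall p q, ptrace2 (Y p q) = delta_mx (f p) (f q)) ->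
  forall p q, Y p q = delta_mx (f p) (f q) *t
     (\matrix_(c, c') Y p0 p0 (ind (f p0) c) (ind (f p0) c')).
Proof.
move=> /blockposE hY hP.
have cs := qf_cs hY.
have tsum p q x y : \sum_c Y p q (ind x c) (ind y c) = ((x == f p) && (y == f q))%:R.
  by have := congr1 (fun A : 'M_N => A x y) (hP p q); rewrite !mxE.
have hd p x c : x != f p -> Y p p (ind x c) (ind x c) = 0.
  move=> hx; have := tsum p p x x; rewrite (negbTE hx) /=.
  move/psumr_eq0P => H; apply: H => // c' _.
  by rewrite -qf_uv; apply: hY.
have hz1 p q x c z : x != f p -> Y p q (ind x c) z = 0.
  move=> hx; have h0 : qf Y (uv p (ind x c)) (uv p (ind x c)) = 0 by rewrite qf_uv hd.
  have [h _] := cs _ (uv q z) h0.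
  by move: h; rewrite qf_uv.
have hz2 p q y c z : y != f q -> Y p q z (ind y c) = 0.
  move=> hy; have h0 : qf Y (uv q (ind y c)) (uv q (ind y c)) = 0 by rewrite qf_uv hd.
  have [_ h] := cs _ (uv p z) h0.
  by move: h; rewrite qf_uv.
pose Vc p p' (c : 'I_M) := fun r z => 1 * uv p (ind (f p) c) r z +
   (fun r z => (-1) * uv p' (ind (f p') c) r z) r z.
have hV p p' c : qf Y (Vc p p' c) (Vc p p' c) = 0.
  have hs : \sum_c qf Y (Vc p p' c) (Vc p p' c) = 0.
    rewrite /Vc.
    under eq_bigr do rewrite qfDl !qfDr !qfZl !qfZr !qf_uv.
    rewrite !big_split /= -!mulr_sumr !big_split /= -!mulr_sumr !tsum !eqxx /= rmorphN /= conjC1.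
    ring.
  by move/psumr_eq0P: hs => H; apply: H => // c' _; apply: hY.
have hT p p' q c c' : Y p q (ind (f p) c) (ind (f q) c') =
    Y p' q (ind (f p') c) (ind (f q) c').
  have [h _] := cs _ (uv q (ind (f q) c')) (hV p p' c).
  move: h; rewrite /Vc qfDl !qfZl !qf_uv conjC1 rmorphN /= conjC1 mul1r mulN1r.
  by move/eqP; rewrite subr_eq0 => /eqP.
have hT' p q q' c c' : Y p q (ind (f p) c) (ind (f q) c') =
    Y p q' (ind (f p) c) (ind (f q') c').
  have [_ h] := cs _ (uv p (ind (f p) c)) (hV q q' c').
  move: h; rewrite /Vc qfDr !qfZr !qf_uv mul1r mulN1r.
  by move/eqP; rewrite subr_eq0 => /eqP.
move=> p q; apply/matrixP => z w.
case: (mxtens_indexP z) => x c; case: (mxtens_indexP w) => y c'.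
rewrite tensmxE !mxE.
case: (eqVneq x (f p)) => [->|hx]; last by rewrite hz1 // mul0r.
case: (eqVneq y (f q)) => [->|hy]; last by rewrite hz2 // andbF mul0r.
rewrite ?eqxx ?mul1r.
by rewrite (hT p p0 q) (hT' p0 q p0).
Qed.

Lemma lin0 N M (f : 'M[C]_N -> 'M[C]_M) : linmap f -> f 0 = 0.
Proof.
move=> hf; have h := hf 1 0 0; rewrite !scale1r addr0 in h.
by apply: (addIr (f 0)); rewrite add0r -h.
Qed.

Lemma linD N M (f : 'M[C]_N -> 'M[C]_M) x y : linmap f -> f (x + y) = f x + f y.
Proof. by move=> hf; have := hf 1 x y; rewrite !scale1r. Qed.

Lemma linZ N M (f : 'M[C]_N -> 'M[C]_M) a x : linmap f -> f (a *: x) = a *: f x.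
Proof. by move=> hf; have := hf a x 0; rewrite !addr0 (lin0 hf) addr0. Qed.

Lemma lin_sum N M (f : 'M[C]_N -> 'M[C]_M) (I : finType) (F : I -> 'M[C]_N) :
  linmap f -> f (\sum_i F i) = \sum_i f (F i).
Proof.
move=> hf; apply: (big_morph f); [by move=> x y; apply: linD | exact: lin0].
Qed.

Lemma cq_char m k (X : 'M[C]_(m * k)) :
  @cq_alg C m k X <-> forall a a' b b', a != a' -> X (ind a b) (ind a' b') = 0.
Proof.
split.
  move=> [p [xs [ys [hr ->]]]] a a' b b' haa.
  rewrite summxE; apply: big1 => r _; rewrite tensmxE.
  have [/is_diag_mxP hd _] := hr r; by rewrite hd // mul0r.
move=> H; exists m, (fun a => delta_mx a a),
  (fun a => \matrix_(b, b') X (ind a b) (ind a b')); split.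
  move=> r; split=> //; apply/is_diag_mxP => x y hxy; rewrite mxE.
  case: eqP => [exr|//]; case: eqP => [eyr|//].
  by rewrite exr eyr eqxx in hxy.
apply/matrixP => z w.
case: (mxtens_indexP z) => x c; case: (mxtens_indexP w) => y c'.
rewrite summxE (bigD1 x) //= [X in _ + X]big1 ?addr0 => [|r /negbTE hr]; last first.
  by rewrite tensmxE !mxE eq_sym hr mul0r.
rewrite tensmxE !mxE eqxx /=.
case: eqP => [->|hxy]; first by rewrite mul1r.
by rewrite H ?mul0r //; apply/eqP => e; apply: hxy; rewrite e.
Qed.

Lemma cq_tens n d (A : 'M[C]_n) (B : 'M[C]_d) : is_diag_mx A -> @cq_alg C n d (A *t B).
Proof.
move=> /is_diag_mxP hA; apply/cq_char => a a' b b' h.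
by rewrite tensmxE hA // mul0r.
Qed.

Lemma diag_delta n (i : 'I_n) : is_diag_mx (delta_mx i i : 'M[C]_n).
Proof.
apply/is_diag_mxP => x y hxy; rewrite mxE.
case: eqP => [exr|//]; case: eqP => [eyr|//].
by rewrite exr eyr eqxx in hxy.
Qed.

Definition ptrace1 N M (X : 'M[C]_(N * M)) : 'M[C]_M :=
  \matrix_(c, c') \sum_(a < N) X (ind a c) (ind a c').

Lemma ptrace1_tens N M (A : 'M[C]_N) (B : 'M[C]_M) : ptrace1 (A *t B) = \tr A *: B.
Proof.
apply/matrixP => c c'; rewrite !mxE big_distrl; apply: eq_bigr => a _.
by rewrite tensmxE.
Qed.

Lemma ptrace1_lin N M a (X Y : 'M[C]_(N * M)) :
  ptrace1 (a *: X + Y) = a *: ptrace1 X + ptrace1 Y.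
Proof.
apply/matrixP => c c'; rewrite !mxE mulr_sumr -big_split; apply: eq_bigr => x _.
by rewrite !mxE.
Qed.

Lemma tr_ptrace1 N M (X : 'M[C]_(N * M)) : \tr (ptrace1 X) = \tr X.
Proof.
rewrite /mxtrace sum_tens exchange_big; apply: eq_bigr => c _; by rewrite mxE.
Qed.

Lemma tr_ptrace2 N M (X : 'M[C]_(N * M)) : \tr (ptrace2 X) = \tr X.
Proof.
rewrite /mxtrace sum_tens; apply: eq_bigr => c _; by rewrite mxE.
Qed.

Lemma tr_delta n (i : 'I_n) : \tr (delta_mx i i : 'M[C]_n) = 1.
Proof.
rewrite /mxtrace (bigD1 i) //= big1 ?addr0 => [|x /negbTE hx]; rewrite mxE ?eqxx //.
by rewrite hx.
Qed.

Lemma tr_tens N M (A : 'M[C]_N) (B : 'M[C]_M) : \tr (A *t B) = \tr A * \tr B.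
Proof.
rewrite /mxtrace sum_tens big_distrl; apply: eq_bigr => a _.
rewrite big_distrr; apply: eq_bigr => c _; by rewrite tensmxE.
Qed.

Lemma tens_suml N M P Q (I : finType) (F : I -> 'M[C]_(N, M)) (B : 'M[C]_(P, Q)) :
  (\sum_i F i) *t B = \sum_i (F i *t B).
Proof.
apply/matrixP => z w; rewrite !mxE summxE big_distrl summxE.
by apply: eq_bigr => i _; rewrite mxE.
Qed.

Lemma tens_sumr N M P Q (I : finType) (A : 'M[C]_(N, M)) (F : I -> 'M[C]_(P, Q)) :
  A *t (\sum_i F i) = \sum_i (A *t F i).
Proof.
apply/matrixP => z w; rewrite !mxE summxE big_distrr summxE.
by apply: eq_bigr => i _; rewrite mxE.
Qed.

Lemma tensZl N M P Q a (A : 'M[C]_(N, M)) (B : 'M[C]_(P, Q)) :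
  (a *: A) *t B = a *: (A *t B).
Proof. by apply/matrixP => z w; rewrite !mxE mulrA. Qed.

Lemma tensZr N M P Q a (A : 'M[C]_(N, M)) (B : 'M[C]_(P, Q)) :
  A *t (a *: B) = a *: (A *t B).
Proof. by apply/matrixP => z w; rewrite !mxE mulrCA. Qed.

Lemma tensDl N M P Q (A A' : 'M[C]_(N, M)) (B : 'M[C]_(P, Q)) :
  (A + A') *t B = A *t B + A' *t B.
Proof. by apply/matrixP => z w; rewrite !mxE mulrDl. Qed.

Lemma delta_tens N M (a b : 'I_N) (c e : 'I_M) :
  delta_mx a b *t delta_mx c e = delta_mx (ind a c) (ind b e) :> 'M[C]_(N * M).
Proof.
apply/matrixP => z w.
case: (mxtens_indexP z) => x y; case: (mxtens_indexP w) => x' y'.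
rewrite tensmxE !mxE !(inj_eq (can_inj (@mxtens_indexK N M))) !xpair_eqE.
by case: (x == a); case: (y == c); case: (x' == b); case: (y' == e); rewrite /= ?mulr1 ?mulr0.
Qed.

Lemma qf_delta D N (f : 'I_D -> 'I_N) (V W : 'I_D -> 'I_N -> C) :
  qf (fun p q => delta_mx (f p) (f q)) V W = \sum_p \sum_q (V p (f p))^* * W q (f q).
Proof.
apply: eq_bigr => p _; apply: eq_bigr => q _.
rewrite (bigD1 (f p)) //= [X in _ + X]big1 ?addr0 => [|x /negbTE hx]; last first.
  by apply: big1 => y _; rewrite mxE hx /= mulr0 mul0r.
rewrite (bigD1 (f q)) //= [X in _ + X]big1 ?addr0 => [|y /negbTE hy]; last first.
  by rewrite mxE hy andbF /= mulr0 mul0r.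
by rewrite mxE !eqxx /= mulr1.
Qed.


Lemma blockpos_ptrace1 D N M (Z : 'I_D -> 'I_D -> 'M[C]_(N * M)) :
  blockpos Z -> blockpos (fun p q => ptrace1 (Z p q)).
Proof.
move=> /blockposE hZ; apply/blockposE => U.
pose W (a : 'I_N) : 'I_D -> 'I_(N * M) -> C := fun p z =>
  if (@mxtens_unindex N M z).1 == a then U p (@mxtens_unindex N M z).2 else 0.
have hW a : qf Z (W a) (W a) = \sum_p \sum_q \sum_c \sum_c'
     (U p c)^* * Z p q (ind a c) (ind a c') * U q c'.
  apply: eq_bigr => p _; apply: eq_bigr => q _.
  rewrite sum_tens (bigD1 a) //= [X in _ + X]big1 ?addr0 => [|x /negbTE hx]; last first.
    apply: big1 => c _; apply: big1 => y _.
    by rewrite /W !mxtens_indexK /= hx conjC0 !mul0r.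
  apply: eq_bigr => c _.
  rewrite sum_tens (bigD1 a) //= [X in _ + X]big1 ?addr0 => [|y /negbTE hy]; last first.
    by apply: big1 => c' _; rewrite /W !mxtens_indexK /= hy mulr0.
  by apply: eq_bigr => c' _; rewrite /W !mxtens_indexK /= eqxx.
suff -> : qf (fun p q => ptrace1 (Z p q)) U U = \sum_a qf Z (W a) (W a).
  by apply: sumr_ge0 => a _; apply: hZ.
rewrite (eq_bigr _ (fun a _ => hW a)).
rewrite /qf [RHS]exchange_big; apply: eq_bigr => p _.
rewrite [RHS]exchange_big; apply: eq_bigr => q _.
rewrite [RHS]exchange_big; apply: eq_bigr => c _.
rewrite [RHS]exchange_big; apply: eq_bigr => c' _.
by rewrite mxE big_distrr big_distrl.
Qed.

End Gen.
Notation ind a c := (mxtens_index (a, c)).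

Unset Implicit Arguments.
Set Strict Implicit.

Theorem proposition5 (R : realType) (n d m k : nat) (hn : (0 < n)%N) (hd : (0 < d)%N)
  (l : 'M[R[i]]_(n * d) -> 'M[R[i]]_((n * d) * (m * k))) :
  leak (@cq_alg _ n d) (@cq_alg _ m k) l ->
  exists Lambda : 'M[R[i]]_n -> 'M[R[i]]_(m * k),
    [/\ process (@diag_alg _ n) (@cq_alg _ m k) Lambda,
        causal (@diag_alg _ n) Lambda &
        forall (i : 'I_n) (rho : 'M[R[i]]_d),
          l (delta_mx i i *t rho) = (delta_mx i i *t rho) *t Lambda (delta_mx i i)].
Proof.
move=> [[Hlin Hmap HCP] Htr].
pose e0 : 'I_d := Ordinal hd.
pose E0 : 'M[R[i]]_d := delta_mx e0 e0.
pose Lambda := fun D : 'M[R[i]]_n => ptrace1 (l (D *t E0)).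
have cqD (D : 'M[R[i]]_n) : diag_alg D -> @cq_alg _ n d (D *t E0).
  by move=> hD; apply: cq_tens.
exists Lambda; split.
- split.
  + move=> a x y; by rewrite /Lambda tensDl tensZl Hlin ptrace1_lin.
  + move=> D hD; apply/cq_char => a a' b b' h.
    rewrite /Lambda; have [p [xs [ys [hr ->]]]] := Hmap _ (cqD D hD).
    rewrite mxE; apply: big1 => z _; rewrite summxE; apply: big1 => r _.
    rewrite tensmxE; have [_ /cq_char hy] := hr r.
    by rewrite hy // mulr0.
  + move=> D X hX hpos.
    apply: (blockpos_ptrace1 (Z := fun p q => l (X p q *t E0))).
    apply: HCP => [p q|]; first exact: cqD.
    apply/blockposE => V.
    suff -> : qf (fun p q => X p q *t E0) V V =
        qf X (fun p x => V p (ind x e0)) (fun p x => V p (ind x e0)).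
      by move/blockposE: hpos; apply.
    apply: eq_bigr => p _; apply: eq_bigr => q _.
    rewrite sum_tens; apply: eq_bigr => x _.
    rewrite (bigD1 e0) //= [X in _ + X]big1 ?addr0 => [|c /negbTE hc]; last first.
      rewrite sum_tens; apply: big1 => y _; apply: big1 => c' _.
      by rewrite tensmxE mxE hc /= !(mulr0, mul0r).
    rewrite sum_tens; apply: eq_bigr => y _.
    rewrite (bigD1 e0) //= [X in _ + X]big1 ?addr0 => [|c' /negbTE hc']; last first.
      by rewrite tensmxE mxE hc' andbF /= !(mulr0, mul0r).
    by rewrite tensmxE mxE !eqxx /= mulr1.
- move=> D hD; rewrite /Lambda tr_ptrace1 -tr_ptrace2 Htr; last exact: cqD.
  by rewrite tr_tens tr_delta mulr1.
move=> i0 rho.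
pose f := fun p : 'I_d => @mxtens_index n d (i0, p).
pose X := fun p q : 'I_d => (delta_mx (f p) (f q) : 'M[R[i]]_(n * d)).
have Xe p q : X p q = delta_mx i0 i0 *t delta_mx p q by rewrite delta_tens.
have Xcq p q : @cq_alg _ n d (X p q) by rewrite Xe; apply: cq_tens; apply: diag_delta.
have Xpos : blockpos X.
  apply/blockposE => V; rewrite qf_delta.
  have -> : \sum_p \sum_q (V p (f p))^* * V q (f q) =
      (\sum_p V p (f p))^* * (\sum_q V q (f q)).
    rewrite rmorph_sum big_distrl; apply: eq_bigr => p _; by rewrite big_distrr.
  by rewrite mulrC mul_conjC_ge0.
have hY := HCP _ X Xcq Xpos.
have hB := block_prod e0 hY (fun p q => Htr _ (Xcq p q)).
set tau := \matrix_(c, c') _ in hB.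
have LamE : Lambda (delta_mx i0 i0) = tau.
  by rewrite /Lambda /E0 -Xe hB ptrace1_tens tr_delta scale1r.
rewrite LamE (matrix_sum_delta rho) tens_sumr tens_suml (lin_sum _ Hlin).
apply: eq_bigr => p _; rewrite tens_sumr tens_suml (lin_sum _ Hlin).
apply: eq_bigr => q _.
by rewrite !tensZr tensZl (linZ _ _ Hlin) -Xe hB.
Qed.
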